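(* Let $(X,d)$ be a metric space, $v,x\in X$, and $0<\varepsilon\le\frac13$. Suppose $P$ is a path $v=p_0,p_1,\ldots,p_l=x$ of points of $X$ such that $d(v,p_i)\le \varepsilon\, d(v,p_{i+1})$ for all $1\le i\le l-1$. Then $d_P(v,x)\le (1+3\varepsilon)\,d(v,x)$.
   Context: $d_P(v,x)$ denotes the length of the path $P$, i.e. $\sum_{i=1}^{l} d(p_{i-1},p_i)$. *)

(* Defs.v *)
From Stdlib Require Import Reals.
Open Scope R_scope.

Record MetricSpace := {
  carrier :> Type;
  mdist : carrier -> carrier -> R;
  mdist_nonneg : forall x y, 0 <= mdist x y;
  mdist_eq0 : forall x y, mdist x y = 0 <-> x = y;
  mdist_sym : forall x y, mdist x y = mdist y x;
  mdist_tri : forall x y z, mdist x z <= mdist x y + mdist y z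
}.

Fixpoint path_length (X : MetricSpace) (p : nat -> X) (l : nat) : R :=
  match l with
  | O => 0
  | S k => path_length X p k + mdist X (p k) (p (S k))
  end.

(* Main.v *)
Require Import Defs.
From Stdlib Require Import Reals Lra Lia Psatz.
Open Scope R_scope.

Theorem lemma9 (X : MetricSpace) (v x : X) (eps : R)
  (heps0 : 0 < eps) (heps1 : eps <= 1/3)
  (p : nat -> X) (l : nat)
  (hp0 : p 0%nat = v) (hpl : p l = x)
  (hcond : forall i : nat, (1 <= i)%nat -> (i <= l - 1)%nat ->
             mdist X v (p i) <= eps * mdist X v (p (S i))) :
  path_length X p l <= (1 + 3 * eps) * mdist X v x.
Proof.
  assert (H : forall k, (k <= l)%nat ->
    path_length X p k <= (1 + 3 * eps) * mdist X v (p k)).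
  { induction k as [|k IH]; intros Hk.
    - simpl. rewrite hp0. destruct (mdist_eq0 X v v) as [_ H0].
      rewrite H0 by reflexivity. lra.
    - simpl.
      assert (Hr : mdist X v (p k) <= eps * mdist X v (p (S k))).
      { destruct k as [|k].
        - rewrite hp0. destruct (mdist_eq0 X v v) as [_ H0].
          rewrite H0 by reflexivity.
          pose proof (mdist_nonneg X v (p 1%nat)). nra.
        - apply hcond; lia. }
      pose proof (IH ltac:(lia)) as IH'.
      pose proof (mdist_tri X (p k) v (p (S k))) as Ht.
      rewrite (mdist_sym X (p k) v) in Ht.
      pose proof (mdist_nonneg X v (p k)).
      pose proof (mdist_nonneg X v (p (S k))).
      nra. }
  rewrite <- hpl. apply H. lia.
Qed.
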